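(* $\bigcap \mathcal{L}(S_{r,N})=\{\{n\}: n\in\mathbb{N}\}$, where the intersection is taken over all nontrivial atomic exponential Puiseux semirings $S_{r,N}$ (i.e., over all numerical monoids $N$ and all $r\in\mathbb{Q}_{>0}\setminus\mathbb{N}$ with $\mathsf{n}(r)>1$).
   Context: $\mathbb{N}=\{0,1,2,\dots\}$. A numerical monoid $N$ is an additive submonoid of $\mathbb{N}$ with finite complement in $\mathbb{N}$. For $r\in\mathbb{Q}_{>0}$ write $r=\mathsf{n}(r)/\mathsf{d}(r)$ in lowest terms. The exponential Puiseux semiring $S_{r,N}$ is the additive submonoid of $\mathbb{Q}_{\ge0}$ generated by $\{r^k:k\in N\}$; it is called nontrivial if $r\notin\mathbb{N}$, and for $r\notin\mathbb{N}$ it is atomic iff $\mathsf{n}(r)>1$, with atoms $r^s$, $s\in N$. For an atomic monoid $M$, $\mathsf{L}(x)$ is the set of lengths of factorizations of $x$ into atoms ($\mathsf{L}(0)=\{0\}$), and $\mathcal{L}(M)=\{\mathsf{L}(x):x\in M\}$ is its system of sets of lengths. *)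

(* Defs.v *)
From mathcomp Require Import all_boot all_order all_algebra.
Set Implicit Arguments. Unset Strict Implicit. Unset Printing Implicit Defensive.
Import Order.TTheory GRing.Theory Num.Theory.
Local Open Scope ring_scope.

Definition numerical_monoid (N : nat -> Prop) : Prop :=
  [/\ N 0%N, (forall a b, N a -> N b -> N (a + b)%N)
    & exists b : nat, forall n, (b <= n)%N -> N n].

(* Membership in the exponential Puiseux semiring S_{r,N}: the additive
   submonoid of Q_{>=0} generated by { r^k : k in N }, i.e. finite sums
   of such powers (the empty sum being 0). *)
Definition in_SrN (r : rat) (N : nat -> Prop) (x : rat) : Prop :=
  exists s : seq nat, (forall k, k \in s -> N k) /\ x = \sum_(k <- s) r ^+ k.

Definition is_atom (r : rat) (N : nat -> Prop) (a : rat) : Prop :=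
  [/\ in_SrN r N a, a != 0 &
      forall b c, in_SrN r N b -> in_SrN r N c -> a = b + c -> b = 0 \/ c = 0].

Definition lengths (r : rat) (N : nat -> Prop) (x : rat) (n : nat) : Prop :=
  exists s : seq rat, [/\ size s = n, (forall a, a \in s -> is_atom r N a)
                        & x = \sum_(a <- s) a].

Definition in_system_of_lengths (r : rat) (N : nat -> Prop) (A : nat -> Prop) :=
  exists x, in_SrN r N x /\ (forall n, A n <-> lengths r N x n).

Definition nontrivial_atomic_params (r : rat) (N : nat -> Prop) : Prop :=
  [/\ numerical_monoid N, 0 < r, ~~ (r \is a Num.nat) & (1 < numq r)%R].

(* Main.v *)
Require Import Defs.
From mathcomp Require Import all_boot all_order all_algebra.
From mathcomp Require Import zify ring lra.
Import Order.TTheory GRing.Theory Num.Theory.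
Set Implicit Arguments. Unset Strict Implicit.
Local Open Scope ring_scope.

Lemma core (a b : int) : 1 < a -> 1 < b -> coprimez a b ->
  forall (M : nat) (D : nat -> int) (q : int),
  (forall j, -1 <= D j) -> q <= 0 ->
  \sum_(j < M) D j * (a ^+ j * b ^+ (M - j.+1)) = q * b ^+ M ->
  q = 0 /\ (forall j, (j < M)%N -> D j = 0).
Proof.
move=> a1 b1 cab; elim=> [|M IH] D q Dge qle.
  by rewrite big_ord0 expr0 mulr1 => <-; split.
rewrite big_ord_recl /= subn1 /= expr0 mul1r.
have -> : \sum_(i < M) D (lift ord0 i) * (a ^+ (lift ord0 i) * b ^+ (M.+1 - (lift ord0 i).+1))
   = a * \sum_(j < M) D j.+1 * (a ^+ j * b ^+ (M - j.+1)).
  rewrite mulr_sumr; apply: eq_bigr => j _; rewrite lift0 subSS exprS; ring.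
set S := (\sum_(j < M) D j.+1 * _) => E.
have E2 : a * S = (q * b - D 0%N) * b ^+ M.
  by rewrite mulrBl -mulrA -exprS -E; ring.
have : (a %| (q * b - D 0%N) * b ^+ M)%Z by rewrite -E2 dvdz_mulr.
rewrite Gauss_dvdzl; last by rewrite coprimezXr.
case/dvdzP=> Q EQ.
have a0 : a != 0 by rewrite gt_eqF // (lt_trans _ a1).
have ES : S = Q * b ^+ M.
  by apply: (mulfI a0); rewrite E2 EQ; ring.
have D0 := Dge 0%N.
have Qle : Q <= 0 by nia.
have [Q0 DS] := IH (fun j => D j.+1) Q (fun j => Dge j.+1) Qle ES.
have Dz : D 0%N = q * b by move: EQ; rewrite Q0 mul0r; lra.
have q0 : q = 0 by nia.
split=> // -[|j] jM; first by rewrite Dz q0 mul0r.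
exact: DS.
Qed.

Lemma pick_sum (F : nat -> int) M x : (x < M)%N ->
  \sum_(j < M) (x == j)%:R * F j = F x.
Proof.
move=> xM; rewrite (bigD1 (Ordinal xM)) //= eqxx mul1r big1 ?addr0 // => j.
by rewrite -val_eqE /= eq_sym => /negbTE ->; rewrite mul0r.
Qed.

Lemma count_sum (F : nat -> int) M s : all (fun k => k < M)%N s ->
  \sum_(k <- s) F k = \sum_(j < M) (count_mem (j : nat) s)%:R * F j.
Proof.
elim: s => [|x s IH] /=.
  by move=> _; rewrite big_nil big1 // => j _; rewrite mul0r.
case/andP=> xM /IH {}IH; rewrite big_cons IH -(@pick_sum F M x xM) -big_split /=.
by apply: eq_bigr => j _; rewrite natrD mulrDl.
Qed.

Lemma sum_one (s : seq nat) : \sum_(k <- s) (1 : int) = (size s)%:R.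
Proof. by elim: s => [|x s IH]; rewrite ?big_nil ?big_cons ?IH // addrC natr1. Qed.

Lemma rat_conv (a b : int) (r : rat) M s : b != 0 -> r = a%:~R / b%:~R ->
  all (fun k => k < M)%N s ->
  ((\sum_(k <- s) a ^+ k * b ^+ (M - k.+1))%:~R : rat)
    = (b%:~R)^+(M.-1) * \sum_(k <- s) r ^+ k.
Proof.
move=> b0 -> sM; rewrite rmorph_sum mulr_sumr big_seq [RHS]big_seq.
apply: eq_bigr => k ks.
have kM : (k < M)%N by apply: (allP sM).
have B0 : (b%:~R : rat) != 0 by rewrite intr_eq0.
rewrite rmorphM !rmorphXn /= expr_div_n.
have -> : M.-1 = (k + (M - k.+1))%N by lia.
rewrite exprD; field.
by rewrite expf_neq0.
Qed.

Lemma mem_sumn (u : seq nat) k : k \in u -> (k <= sumn u)%N.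
Proof.
elim: u => //= x u IH; rewrite inE => /orP[/eqP ->|/IH]; lia.
Qed.

Lemma rep_common (a b : int) (r : rat) (s t : seq nat) : b != 0 ->
  r = a%:~R / b%:~R ->
  \sum_(k <- s) r ^+ k = \sum_(k <- t) r ^+ k ->
  exists M, [/\ all (fun k => k < M)%N s, all (fun k => k < M)%N t &
    \sum_(j < M) ((count_mem (j : nat) s)%:R - (count_mem (j : nat) t)%:R) * (a ^+ j * b ^+ (M - j.+1)) = 0].
Proof.
move=> b0 er Est.
set M := (sumn (s ++ t)).+1.
have allM : all (fun k => k < M)%N (s ++ t).
  by apply/allP => k kin; rewrite ltnS; apply: mem_sumn.
move: allM; rewrite all_cat => /andP[sM tM].
exists M; split => //.
have E : \sum_(k <- s) a ^+ k * b ^+ (M - k.+1) = \sum_(k <- t) a ^+ k * b ^+ (M - k.+1).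
  by apply: (@intr_inj rat); rewrite !(rat_conv b0 er) // Est.
rewrite (count_sum _ sM) (count_sum _ tM) in E.
under eq_bigr do rewrite mulrBl.
by rewrite sumrB E subrr.
Qed.

Lemma rep_eq (a b : int) (r : rat) (s t : seq nat) : 1 < a -> 1 < b -> coprimez a b ->
  r = a%:~R / b%:~R -> uniq t ->
  \sum_(k <- s) r ^+ k = \sum_(k <- t) r ^+ k -> size s = size t.
Proof.
move=> a1 b1 cab er ut Est.
have b0 : b != 0 by rewrite gt_eqF // (lt_trans _ b1).
have [M [sM tM E]] := rep_common b0 er Est.
have Dge : forall j : nat, -1 <= (count_mem j s)%:R - (count_mem j t)%:R :> int.
  move=> j; rewrite (count_uniq_mem j ut); case: (j \in t); rewrite /= ?natz; lia.
have [_ DZ] := core a1 b1 cab Dge (lexx 0) (etrans E (esym (mul0r _))).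
have : (size s)%:R = (size t)%:R :> int.
  rewrite -!sum_one (count_sum _ sM) (count_sum _ tM).
  apply: eq_bigr => j _; have := DZ j (ltn_ord j); rewrite mulr1; move/eqP; rewrite subr_eq0 => /eqP ->.
  by rewrite mulr1.
by move/eqP; rewrite eqr_nat => /eqP.
Qed.

Lemma count_size M (s : seq nat) : all (fun k => k < M)%N s ->
  \sum_(j < M) (count_mem (j : nat) s)%:R = (size s)%:R :> int.
Proof.
move=> sM; rewrite -sum_one (count_sum _ sM); apply: eq_bigr => j _; by rewrite mulr1.
Qed.

Lemma rep_cong (a b : int) (r : rat) (s t : seq nat) : b != 0 -> coprimez (a - b) b ->
  r = a%:~R / b%:~R ->
  \sum_(k <- s) r ^+ k = \sum_(k <- t) r ^+ k ->
  (a - b %| (size s)%:R - (size t)%:R)%Z.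
Proof.
move=> b0 cab er Est.
have [M [sM tM E]] := rep_common b0 er Est.
set D := fun j : nat => (count_mem j s)%:R - (count_mem j t)%:R :> int.
have H1 : \sum_(j < M) D j * b ^+ (M.-1) =
  \sum_(j < M) D j * (a ^+ j * b ^+ (M - j.+1))
  - \sum_(j < M) D j * ((a ^+ j - b ^+ j) * b ^+ (M - j.+1)).
  rewrite -sumrB; apply: eq_bigr => j _.
  have jM := ltn_ord j.
  have -> : M.-1 = (j + (M - j.+1))%N by lia.
  rewrite exprD; ring.
have H2 : (a - b %| \sum_(j < M) D j * ((a ^+ j - b ^+ j) * b ^+ (M - j.+1)))%Z.
  rewrite (_ : \sum_(j < M) _ = (a - b) * \sum_(j < M) D j *
      ((\sum_(i < j) a ^+ (j.-1 - i) * b ^+ i) * b ^+ (M - j.+1))).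
    by apply: dvdz_mulr; apply: dvdzz.
  by rewrite mulr_sumr; apply: eq_bigr => j _; rewrite subrXX; ring.
rewrite E sub0r -mulr_suml mulrC in H1.
move: H2; rewrite -[X in (_ %| X)%Z]opprK -H1 dvdzE abszN -dvdzE.
rewrite Gauss_dvdzr; last by rewrite coprimezXr.
by rewrite /D sumrB !count_size.
Qed.

Lemma coprimez_sub (a b : int) : coprimez a b -> coprimez (a - b) b.
Proof.
move=> cab; rewrite coprimez_sym /coprimez (_ : a - b = (-1) * b + a); last by ring.
by rewrite gcdzMDl; rewrite coprimez_sym in cab.
Qed.

Lemma atom_pow (r : rat) (N : nat -> Prop) y : 0 < r -> is_atom r N y ->
  exists k, N k /\ y = r ^+ k.
Proof.
move=> r0 [[s [sN ->]] nz H].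
case: s sN nz H => [|k s] sN nz H; first by rewrite big_nil eqxx in nz.
have Nk : N k by apply: sN; rewrite inE eqxx.
rewrite big_cons in H *.
have i1 : in_SrN r N (r ^+ k).
  by exists [:: k]; split; [move=> j; rewrite inE => /eqP -> | rewrite big_seq1].
have i2 : in_SrN r N (\sum_(j <- s) r ^+ j).
  by exists s; split => // j js; apply: sN; rewrite inE js orbT.
have [rk0|->] := H (r ^+ k) (\sum_(j <- s) r ^+ j) i1 i2 erefl.
- by move: rk0; move/eqP; rewrite expf_eq0 gt_eqF // andbF.
- by exists k; rewrite addr0.
Qed.

Lemma pow_atom (r : rat) (N : nat -> Prop) (a b : int) k :
  1 < a -> 1 < b -> coprimez a b -> r = a%:~R / b%:~R -> 0 < r ->
  N k -> is_atom r N (r ^+ k).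
Proof.
move=> a1 b1 cab er r0 Nk; split.
- by exists [:: k]; split; [move=> j; rewrite inE => /eqP -> | rewrite big_seq1].
- by rewrite expf_eq0 gt_eqF // andbF.
move=> y z [s1 [_ ->]] [s2 [_ ->]] E.
have := rep_eq (s := s1 ++ s2) (t := [:: k]) a1 b1 cab er erefl.
rewrite big_cat /= big_seq1 -E => /(_ erefl); rewrite size_cat.
case: s1 {E} => [|x1 s1] /=; first by left; rewrite big_nil.
by case: s2 => [|x2 s2] /=; [right; rewrite big_nil | rewrite addnS].
Qed.

Lemma fact_exps (r : rat) (N : nat -> Prop) x m : 0 < r -> lengths r N x m ->
  exists s, [/\ size s = m, (forall k, k \in s -> N k) & x = \sum_(k <- s) r ^+ k].
Proof.
move=> r0 [l [<- Hl ->]].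
elim: l Hl => [|y l IH] Hl; first by exists [::]; rewrite !big_nil.
have [k [Nk ->]] := atom_pow r0 (Hl y (mem_head _ _)).
have [s [Ss Ns Es]] : exists s, [/\ size s = size l, (forall k, k \in s -> N k) & \sum_(a <- l) a = \sum_(k <- s) r ^+ k].
  by apply: IH => a ai; apply: Hl; rewrite inE ai orbT.
exists (k :: s); split; first by rewrite /= Ss.
  by move=> j; rewrite inE => /orP[/eqP ->|/Ns].
by rewrite !big_cons Es.
Qed.

Lemma exps_fact (r : rat) (N : nat -> Prop) (a b : int) s :
  1 < a -> 1 < b -> coprimez a b -> r = a%:~R / b%:~R -> 0 < r ->
  (forall k, k \in s -> N k) -> lengths r N (\sum_(k <- s) r ^+ k) (size s).
Proof.
move=> a1 b1 cab er r0 Ns; exists [seq r ^+ k | k <- s]; split.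
- by rewrite size_map.
- by move=> y /mapP [k ks ->]; apply: (pow_atom a1 b1 cab er r0); apply: Ns.
- by rewrite big_map.
Qed.

Definition rK (K : nat) : rat := ((K.*2.+1)%:Z)%:~R / (2%:Z)%:~R.

Lemma rK_cop K : coprime `|(K.*2.+1)%:Z| `|(2%:Z)|.
Proof. by rewrite /= coprimen2 /= odd_double. Qed.

Lemma rK_params K : (0 < K)%N -> nontrivial_atomic_params (rK K) (fun _ => True).
Proof.
move=> K0.
have nq : numq (rK K) = (K.*2.+1)%:Z by rewrite /rK coprimeq_num ?rK_cop // mul1r.
have dq : denq (rK K) = 2 by rewrite /rK coprimeq_den ?rK_cop.
split.
- by split => //; exists 0%N.
- by rewrite -numq_gt0 nq.
- by rewrite natrEint Qint_def dq.
- rewrite nq; lia.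
Qed.

Unset Implicit Arguments.
Set Strict Implicit.

Theorem mainTheorem5 (A : nat -> Prop) :
  (forall (r : rat) (N : nat -> Prop),
      nontrivial_atomic_params r N -> in_system_of_lengths r N A)
  <-> (exists n : nat, forall m, A m <-> m = n).
Proof.
split.
- move=> H.
  have gK : forall K, (0 < K)%N ->
      [/\ 1 < (K.*2.+1)%:Z, 1 < (2%:Z), coprimez (K.*2.+1)%:Z 2 &
          rK K = ((K.*2.+1)%:Z)%:~R / (2%:Z)%:~R].
    move=> K K0; split => //; first lia.
    by rewrite coprimezE rK_cop.
  have r0 : forall K, (0 < K)%N -> 0 < rK K.
    by move=> K /rK_params [].
  have [x [[s [Ns ->]] HA]] := H (rK 1) _ (rK_params (isT : (0 < 1)%N)).
  have [a1 b1 cab er] := gK 1%N isT.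
  have An0 : A (size s).
  by apply: (proj2 (HA _)); exact: (exps_fact a1 b1 cab er (r0 1%N isT) Ns).
  exists (size s) => m; split; last by move->.
  move=> Am.
  have KP : (0 < (m + size s).+1)%N by [].
  have [y [_ HB]] := H (rK (m + size s).+1) _ (rK_params KP).
  have [a1' b1' cab' er'] := gK _ KP.
  have [s1 [S1 _ E1]] := fact_exps (r0 _ KP) (proj1 (HB m) Am).
  have [s2 [S2 _ E2]] := fact_exps (r0 _ KP) (proj1 (HB (size s)) An0).
  have := rep_cong (s := s1) (t := s2) (isT : (2%:Z) != 0) (coprimez_sub cab') er'
     (etrans (esym E1) E2).
  rewrite S1 S2 => /dvdzP [q Eq].
  rewrite !natz in Eq.
  have E3 : (m%:Z - (size s)%:Z) = q * (2 * (m%:Z + (size s)%:Z) + 1).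
    by rewrite Eq; congr (_ * _); rewrite -!natz -addnn; lia.
  have [hq|hq|hq] := ltgtP q 0; [nia | nia | move: E3; rewrite hq mul0r; lia].
- move=> [n Hn] r N P.
  case: (P) => [[N0 Nadd [c Nc]] r0 rnn numr].
  have b1 : 1 < denq r.
    have := denq_gt0 r.
    have : denq r != 1.
      apply/negP => /eqP d1; move: rnn; rewrite natrEint Qint_def d1 eqxx /=.
      by rewrite ltW.
    lia.
  have cab : coprimez (numq r) (denq r) by rewrite coprimezE coprime_num_den.
  have er : r = (numq r)%:~R / (denq r)%:~R by rewrite divq_num_den.
  exists (\sum_(k <- iota c n) r ^+ k); split.
    by exists (iota c n); split => // k; rewrite mem_iota => /andP[ck _]; apply: Nc.
  move=> m; rewrite Hn; split.
  + move=> ->; rewrite -{2}(size_iota c n).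
    apply: (exps_fact numr b1 cab er r0) => k.
    by rewrite mem_iota => /andP[ck _]; apply: Nc.
  + move=> L; have [s' [S' _ E']] := fact_exps r0 L.
    by rewrite -S' (rep_eq numr b1 cab er (iota_uniq c n) (esym E')) size_iota.
Qed.
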